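(* Let $\Omega\subseteq\mathbb{R}^n$ be open and convex, let $f:\Omega\to\mathbb{R}$ be convex and differentiable with $\nabla f$ Lipschitz continuous with constant $L$ (extend $f$ by $+\infty$ outside $\Omega$), let $g:\mathbb{R}^n\to\mathbb{R}\cup\{+\infty\}$ be convex with closed sublevel sets, and let $h=f+g$ have compact sublevel sets and $h^\star=\inf_x h(x)<\infty$. Run the oracle-structured minimization method (described in the context) from $x^0\in\Omega$, producing iterates $x^k$ and tentative steps $v^k=x^{k+1/2}-x^k$. Then $h(x^{k+1})\le h(x^k)$ for all $k$ and $v^k\to 0$ as $k\to\infty$.
   Context: Oracle-structured minimization method (OSMM). Fixed parameters: memory $M\ge1$ (integer), $\alpha,\beta\in(0,1)$, $\tau_{\min}>0$, $0<\mu_{\min}\le\mu_{\max}$, $\gamma_{\rm dec}\in(0,1)$, $\gamma_{\rm inc}>1$, and an initial $\mu_0\in[\mu_{\min},\mu_{\max}]$. There is a constant $C$ and, for each $k$, a symmetric positive semidefinite matrix $H_k$ with $\|H_k\|_2\le C$ (otherwise arbitrary, e.g. a quasi-Newton curvature estimate). For $k=0,1,2,\dots$: (1) $l_k(x)=\max_{i=\max\{0,k-M+1\},\dots,k}\big(f(x^i)+\nabla f(x^i)^T(x-x^i)\big)$; $\tau_k=\operatorname{Tr}(H_k)/n$; $\lambda_k=\mu_k(\tau_k+\tau_{\min})$. (2) $x^{k+1/2}=\operatorname*{argmin}_x\big(l_k(x)+g(x)+\tfrac12(x-x^k)^T(H_k+\lambda_kI)(x-x^k)\big)$, $v^k=x^{k+1/2}-x^k$.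 (3) With $\phi_k(t)=f(x^k+tv^k)+t\,g(x^{k+1/2})+(1-t)g(x^k)$ for $t\in[0,1]$, let $t_k=\beta^j$ where $j$ is the smallest nonnegative integer with $\phi_k(t_k)\le h(x^k)-\frac{\alpha t_k}{2}(v^k)^T(H_k+\lambda_kI)v^k$; set $x^{k+1}=x^k+t_kv^k$. (4) $\mu_{k+1}=\max\{\gamma_{\rm dec}\mu_k,\mu_{\min}\}$ if $t_k=1$, and $\mu_{k+1}=\min\{\gamma_{\rm inc}\mu_k,\mu_{\max}\}$ if $t_k<1$. *)

(* Defs.v *)
From HB Require Import structures.
From mathcomp Require Import all_boot all_order all_algebra.
From mathcomp Require Import all_classical all_reals all_analysis.
Set Implicit Arguments.
Unset Strict Implicit.
Unset Printing Implicit Defensive.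
Import Order.TTheory GRing.Theory Num.Theory.
Import numFieldNormedType.Exports.
Local Open Scope classical_set_scope.
Local Open Scope ring_scope.

Section OSMM.
Variables (R : realType) (n : nat).
Local Notation vec := 'cV[R]_n.

Definition dotv (u v : vec) : R := \sum_(i < n) u i 0 * v i 0.
Definition enorm (u : vec) : R := Num.sqrt (dotv u u).
Definition qform (A : 'M[R]_n) (v : vec) : R := dotv v (A *m v).

Definition fext (Om : set vec) (f : vec -> R) (x : vec) : \bar R :=
  if x \in Om then (f x)%:E else +oo%E.

Definition hobj (Om : set vec) (f : vec -> R) (g : vec -> \bar R) (x : vec) : \bar R :=
  (fext Om f x + g x)%E.

Definition convex_on (Om : set vec) : Prop :=
  forall (x y : vec) (t : R), Om x -> Om y -> 0 <= t <= 1 -> Om (t *: x + (1 - t) *: y).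

Definition convex_fun_on (Om : set vec) (f : vec -> R) : Prop :=
  forall (x y : vec) (t : R), Om x -> Om y -> 0 <= t <= 1 ->
    f (t *: x + (1 - t) *: y) <= t * f x + (1 - t) * f y.

Definition convex_efun (g : vec -> \bar R) : Prop :=
  forall (x y : vec) (t : R), 0 < t < 1 ->
    (g (t *: x + (1 - t) *: y)%R <= t%:E * g x + (1 - t)%R%:E * g y)%E.

(* cutting-plane model l_k(y) = max_{i = max(0,k-M+1)..k} f(x^i) + grad f(x^i)^T (y - x^i) *)
Definition affine_cut (f : vec -> R) (gradf : vec -> vec) (xs : nat -> vec) (i : nat) (y : vec) : R :=
  f (xs i) + dotv (gradf (xs i)) (y - xs i).

Definition cutmodel (M : nat) (f : vec -> R) (gradf : vec -> vec) (xs : nat -> vec)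
  (k : nat) (y : vec) : R :=
  \big[Num.max/affine_cut f gradf xs k y]_(k.+1 - M <= i < k.+1) affine_cut f gradf xs i y.

Definition tauk (A : 'M[R]_n) : R := \tr A / n%:R.
Definition lambdak (tau_min mu : R) (A : 'M[R]_n) : R := mu * (tauk A + tau_min).
Definition regmx (tau_min mu : R) (A : 'M[R]_n) : 'M[R]_n := A + (lambdak tau_min mu A)%:M.

(* The OSMM iteration, given the data of the problem, the parameters,
   the curvature matrices H and the generated sequences:
   x k = x^k, xh k = x^{k+1/2}, mu k = mu_k, t k = t_k. *)
Definition osmm_run (Om : set vec) (f : vec -> R) (gradf : vec -> vec) (g : vec -> \bar R)
  (M : nat) (alpha beta tau_min mu_min mu_max gdec ginc : R)
  (H : nat -> 'M[R]_n) (x xh : nat -> vec) (mu t : nat -> R) : Prop :=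
  forall k : nat,
    let A := regmx tau_min (mu k) (H k) in
    let v := xh k - x k in
    let subobj := fun y : vec =>
      ((cutmodel M f gradf x k y + qform A (y - x k) / 2)%:E + g y)%E in
    let phi := fun s : R =>
      (fext Om f (x k + s *: v)%R + s%:E * g (xh k) + (1 - s)%R%:E * g (x k))%E in
    let armijo := fun s : R =>
      (phi s <= hobj Om f g (x k) - (alpha * s / 2 * qform A v)%:E)%E in
    [/\
        (forall y, (subobj (xh k) <= subobj y)%E),
        (exists j : nat, t k = beta ^+ j /\ armijo (beta ^+ j) /\
            forall i : nat, (i < j)%N -> ~ armijo (beta ^+ i)),
        x k.+1 = x k + t k *: v &
        mu k.+1 = (if t k == 1 then Num.max (gdec * mu k) mu_min
                   else Num.min (ginc * mu k) mu_max)].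

End OSMM.

(* Main.v *)
Require Import Defs.
From HB Require Import structures.
From mathcomp Require Import all_boot all_order all_algebra.
From mathcomp Require Import all_classical all_reals all_analysis.
From mathcomp Require Import ring lra zify.
Import Order.TTheory GRing.Theory Num.Theory.
Import numFieldNormedType.Exports.
Local Open Scope classical_set_scope.
Local Open Scope ring_scope.
Set Implicit Arguments.
Unset Strict Implicit.

Lemma dotvC (R : realType) n (u w : 'cV[R]_n) : dotv u w = dotv w u.
Proof. by apply: eq_bigr => i _; rewrite mulrC. Qed.

Lemma dotvDl (R : realType) n (u u' w : 'cV[R]_n) : dotv (u + u') w = dotv u w + dotv u' w.
Proof. by rewrite /dotv -big_split; apply: eq_bigr => i _; rewrite !mxE mulrDl. Qed.

Lemma dotvNl (R : realType) n (u w : 'cV[R]_n) : dotv (- u) w = - dotv u w.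
Proof. by rewrite /dotv -sumrN; apply: eq_bigr => i _; rewrite !mxE mulNr. Qed.

Lemma dotvBl (R : realType) n (u u' w : 'cV[R]_n) : dotv (u - u') w = dotv u w - dotv u' w.
Proof. by rewrite dotvDl dotvNl. Qed.

Lemma dotvZl (R : realType) n (s : R) (u w : 'cV[R]_n) : dotv (s *: u) w = s * dotv u w.
Proof. by rewrite /dotv mulr_sumr; apply: eq_bigr => i _; rewrite !mxE mulrA. Qed.

Lemma dotvDr (R : realType) n (u u' w : 'cV[R]_n) : dotv w (u + u') = dotv w u + dotv w u'.
Proof. by rewrite dotvC dotvDl !(dotvC w). Qed.
Lemma dotvBr (R : realType) n (u u' w : 'cV[R]_n) : dotv w (u - u') = dotv w u - dotv w u'.
Proof. by rewrite dotvC dotvBl !(dotvC w). Qed.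
Lemma dotvZr (R : realType) n (s : R) (u w : 'cV[R]_n) : dotv w (s *: u) = s * dotv w u.
Proof. by rewrite dotvC dotvZl dotvC. Qed.
Lemma dotv0r (R : realType) n (w : 'cV[R]_n) : dotv w 0 = 0.
Proof. by rewrite /dotv big1 // => i _; rewrite mxE mulr0. Qed.

Lemma dotv_ge0 (R : realType) n (u : 'cV[R]_n) : 0 <= dotv u u.
Proof. by apply: sumr_ge0 => i _; rewrite -expr2 sqr_ge0. Qed.

Lemma enorm_ge0 (R : realType) n (u : 'cV[R]_n) : 0 <= enorm u.
Proof. exact: sqrtr_ge0. Qed.

Lemma enorm_sq (R : realType) n (u : 'cV[R]_n) : enorm u ^+ 2 = dotv u u.
Proof. by rewrite sqr_sqrtr // dotv_ge0. Qed.

Lemma enormZ (R : realType) n (s : R) (u : 'cV[R]_n) : enorm (s *: u) = `|s| * enorm u.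
Proof. by rewrite /enorm dotvZl dotvZr mulrA sqrtrM -?expr2 ?sqr_ge0 // sqrtr_sqr. Qed.

Lemma cs_sq (R : realType) n (u w : 'cV[R]_n) : dotv u w ^+ 2 <= dotv u u * dotv w w.
Proof.
set a := dotv u u; set b := dotv w w; set c := dotv u w.
have [b0|bpos] := eqVneq b 0.
  have w0 : forall i, w i 0 = 0.
    move=> i; have Hge : forall j, 0 <= w j 0 * w j 0 by move=> j; rewrite -expr2 sqr_ge0.
    have := psumr_eq0P (P := xpredT) (F := fun i => w i 0 * w i 0) _ b0.
    move=> H; have := H (fun j _ => Hge j) i isT.
    by move/eqP; rewrite mulf_eq0 orbb => /eqP.
  have -> : c = 0 by rewrite /c /dotv big1 // => i _; rewrite w0 mulr0.
  by rewrite b0 expr0n mulr0.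
have bgt : 0 < b by rewrite lt0r bpos dotv_ge0.
have := dotv_ge0 (b *: u - c *: w).
rewrite !(dotvBl, dotvBr, dotvZl, dotvZr) -/a -/b -/c (dotvC w u) -/c => H.
have : 0 <= b * (a * b - c ^+ 2) by move: H; rewrite expr2; nra.
by rewrite pmulr_rge0 // subr_ge0.
Qed.

Lemma cs (R : realType) n (u w : 'cV[R]_n) : dotv u w <= enorm u * enorm w.
Proof.
rewrite /enorm -sqrtrM ?dotv_ge0 //.
apply: le_trans (ler_norm _) _.
by rewrite -sqrtr_sqr ler_sqrt ?mulr_ge0 ?dotv_ge0 // cs_sq.
Qed.
Lemma seg_is_derive (R : realType) n (Om : set 'cV[R]_n) (f : 'cV[R]_n -> R) gradf :
  (forall y, Om y -> differentiable f y /\ forall w, 'd f y w = dotv (gradf y) w) ->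
  forall (x d : 'cV[R]_n) (s : R), Om (x + s *: d) ->
  is_derive s 1 (fun u : R => f (x + u *: d)) (dotv (gradf (x + s *: d)) d).
Proof.
move=> Hf x d s Os; have [df dfE] := Hf _ Os.
have E : (fun h : R => h^-1 *: (((fun u : R => f (x + u *: d)) \o shift s) (h *: 1) - (fun u : R => f (x + u *: d)) s))
   = (fun h : R => h^-1 *: ((f \o shift (x + s *: d)) (h *: d) - f (x + s *: d))).
  apply/funext => h /=; congr (_ *: (f _ - _)).
  by rewrite [h *: 1]mulr1 scalerDl addrCA.
have dv : derivable (fun u : R => f (x + u *: d)) s 1.
  rewrite /derivable E; have := (diff_derivable (v:=d) df); rewrite /derivable. exact.
have := derivableP dv.
suff -> : 'D_1 (fun u : R => f (x + u *: d)) s = dotv (gradf (x + s *: d)) d by [].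
by rewrite /derive E -dfE -deriveE.
Qed.

Lemma seg_pt (R : realType) n (x d : 'cV[R]_n) (s u : R) : 0 < s ->
  (u / s) *: (x + s *: d) + (1 - u / s) *: x = x + u *: d.
Proof.
move=> s0; rewrite scalerDr scalerA divfK ?gt_eqF // scalerBl scale1r.
by rewrite addrAC addrCA subrr addr0 addrC.
Qed.

Lemma seg_in (R : realType) n (Om : set 'cV[R]_n) (x d : 'cV[R]_n) (s u : R) :
  convex_on Om -> Om x -> Om (x + s *: d) -> 0 < s -> 0 <= u <= s -> Om (x + u *: d).
Proof.
move=> cO Ox Os s0 /andP[u0 us]; rewrite -(seg_pt x d u s0); apply: cO => //.
  apply/andP; split; first by rewrite divr_ge0 // ltW.
  by rewrite ler_pdivrMr // mul1r.
Qed.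

Lemma seg_bound (R : realType) n (Om : set 'cV[R]_n) (f : 'cV[R]_n -> R) gradf L
  (x d : 'cV[R]_n) (s : R) :
  convex_on Om ->
  (forall y, Om y -> differentiable f y /\ forall w, 'd f y w = dotv (gradf y) w) ->
  (forall y z, Om y -> Om z -> enorm (gradf y - gradf z) <= L * enorm (y - z)) ->
  Om x -> Om (x + s *: d) -> 0 < s ->
  `| f (x + s *: d) - f x - s * dotv (gradf x) d | <= `|L| * s ^+ 2 * dotv d d.
Proof.
move=> cO Hf HL Ox Os s0.
have inseg u : 0 <= u <= s -> Om (x + u *: d) by move=> us; exact: seg_in Os s0 us.
have D1 : forall u, u \in `]0, s[ -> is_derive u 1 (fun u : R => f (x + u *: d)) (dotv (gradf (x + u *: d)) d).
  move=> u; rewrite in_itv /= => /andP[u0 us]; apply: (seg_is_derive Hf).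
  by apply: inseg; rewrite !ltW.
have C1 : {within `[0, s], continuous (fun u : R => f (x + u *: d))}.
  apply: continuous_in_subspaceT => u; rewrite inE /= in_itv /= => us.
  have := seg_is_derive Hf (inseg u us) => /(@ex_derive _ _ _ _ _ _) /derivable1_diffP.
  by move/differentiable_continuous.
have [xi xiI E] := @MVT R (fun u : R => f (x + u *: d)) (fun u => dotv (gradf (x + u *: d)) d) 0 s s0 D1 C1.
move: E => /=; rewrite scale0r addr0 subr0 => E.
move: xiI; rewrite in_itv /= => /andP[xi0 xis].
have Oxi : Om (x + xi *: d) by apply: inseg; rewrite !ltW.
have B : `|dotv (gradf (x + xi *: d) - gradf x) d| <= `|L| * s * dotv d d.
  have nd := enorm_ge0 d.
  have H1 : `|dotv (gradf (x + xi *: d) - gradf x) d| <= enorm (gradf (x + xi *: d) - gradf x) * enorm d.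
    rewrite ler_norml cs andbT lerNl -dotvNl.
    apply: le_trans (cs _ _) _.
    by rewrite /enorm dotvNl dotvC dotvNl opprK.
  apply: le_trans H1 _.
  have H2 := HL _ _ Oxi Ox; rewrite addrAC subrr add0r enormZ (ger0_norm (ltW xi0)) in H2.
  rewrite -enorm_sq expr2 mulrA; apply: ler_wpM2r => //.
  apply: le_trans H2 _; rewrite mulrA; apply: ler_wpM2r => //.
  apply: (@le_trans _ _ (`|L| * xi)); first by apply: ler_wpM2r; [rewrite ltW|rewrite real_ler_norm ?num_real].
  by apply: ler_wpM2l => //; rewrite ltW.
rewrite dotvBl in B.
have -> : f (x + s *: d) - f x - s * dotv (gradf x) d
   = s * (dotv (gradf (x + xi *: d)) d - dotv (gradf x) d) by rewrite E; ring.
rewrite normrM (ger0_norm (ltW s0)).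
have -> : `|L| * s ^+ 2 * dotv d d = s * (`|L| * s * dotv d d) by ring.
by apply: ler_wpM2l => //; exact: ltW.
Qed.

Lemma grad_ineq (R : realType) n (Om : set 'cV[R]_n) (f : 'cV[R]_n -> R) gradf L (x y : 'cV[R]_n) :
  convex_on Om -> convex_fun_on Om f ->
  (forall y, Om y -> differentiable f y /\ forall w, 'd f y w = dotv (gradf y) w) ->
  (forall y z, Om y -> Om z -> enorm (gradf y - gradf z) <= L * enorm (y - z)) ->
  Om x -> Om y -> f x + dotv (gradf x) (y - x) <= f y.
Proof.
move=> cO cf Hf HL Ox Oy; set d := y - x.
have xd1 : x + 1 *: d = y by rewrite scale1r /d addrC subrK.
have key s : 0 < s <= 1 -> dotv (gradf x) d <= f y - f x + `|L| * dotv d d * s.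
  move=> /andP[s0 s1].
  have Os : Om (x + s *: d) by apply: (seg_in (s := 1)) => //; [rewrite xd1 | rewrite s1 ltW].
  have B := seg_bound cO Hf HL Ox Os s0.
  have C : f (x + s *: d) <= s * f y + (1 - s) * f x.
    rewrite -(seg_pt x d s ltr01) xd1 !divr1; apply: cf => //; rewrite s1 ltW //.
  move: B; rewrite ler_norml => /andP[B _].
  have : s * dotv (gradf x) d <= s * (f y - f x + `|L| * dotv d d * s).
    have -> : s * (f y - f x + `|L| * dotv d d * s) = s * f y - s * f x + `|L| * s ^+ 2 * dotv d d by ring.
    move: B C; set a := f (x + s *: d); set P := `|L| * s ^+ 2 * dotv d d.
    have -> : (1 - s) * f x = f x - s * f x by ring.
    lra.
  by rewrite ler_pM2l.
apply/ler_addgt0Pr => e e0.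
set K := `|L| * dotv d d.
have K0 : 0 <= K by rewrite mulr_ge0 ?dotv_ge0.
set s := Num.min 1 (e / (K + 1)).
have s0 : 0 < s by rewrite lt_min ltr01 divr_gt0 // ltr_pwDr.
have s1 : s <= 1 by rewrite ge_min lexx.
have := key s; rewrite s0 s1 => /(_ isT) H1.
have : s <= e / (K + 1) by rewrite ge_min lexx orbT.
rewrite ler_pdivlMr ?ltr_pwDr // => H.
have : K * s <= e by nra.
move: H1; rewrite -/K; lra.
Qed.


Lemma fin_of (R : realType) (e : \bar R) : e != -oo%E -> e != +oo%E -> e = (fine e)%:E.
Proof. by move=> h1 h2; rewrite fineK // fin_numE h1 h2. Qed.

Lemma fext_in (R : realType) n (Om : set 'cV[R]_n) f y : Om y -> fext Om f y = (f y)%:E.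
Proof. by move=> Oy; rewrite /fext mem_set. Qed.

Lemma fext_out (R : realType) n (Om : set 'cV[R]_n) f y : ~ Om y -> fext Om f y = +oo%E.
Proof. by move=> Oy; rewrite /fext ifF //; apply/negP; rewrite inE. Qed.

Lemma absmul_le (R : realType) (u a : R) : 0 <= u <= 1 -> u * a <= `|a|.
Proof.
move=> /andP[u0 u1]; have h1 := ler_norm a; have h2 : 0 <= `|a| by [].
have : u * a <= u * `|a| by apply: ler_wpM2l.
have : u * `|a| <= `|a| by rewrite -[X in _ <= X]mul1r; apply: ler_wpM2r.
lra.
Qed.

Lemma seg_h_bound (R : realType) n (Om : set 'cV[R]_n) (f : 'cV[R]_n -> R) gradf L g (p b : 'cV[R]_n) (u : R) :
  convex_on Om ->
  (forall y, Om y -> differentiable f y /\ forall w, 'd f y w = dotv (gradf y) w) ->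
  (forall y z, Om y -> Om z -> enorm (gradf y - gradf z) <= L * enorm (y - z)) ->
  convex_efun g ->
  Om p -> g p = (fine (g p))%:E -> g b = (fine (g b))%:E ->
  0 <= u < 1 -> Om (p + u *: (b - p)) ->
  (hobj Om f g (p + u *: (b - p)) <=
  (f p + `|dotv (gradf p) (b - p)| + `|L| * dotv (b - p) (b - p) + (`|fine (g b)| + `|fine (g p)|))%:E)%E.
Proof.
move=> cO Hf HL cg Op gpE gbE /andP[u0 u1] Ou.
have uu : 0 <= u <= 1 by rewrite u0 ltW.
have K0 : 0 <= `|L| * dotv (b - p) (b - p) by rewrite mulr_ge0 ?dotv_ge0.
have ab0 : 0 <= `|fine (g b)| + `|fine (g p)| by rewrite addr_ge0.
rewrite /hobj fext_in // EFinD; apply: leeD.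
  rewrite lee_fin; have [->|upos] := eqVneq u 0.
    rewrite scale0r addr0; have : 0 <= `|dotv (gradf p) (b - p)| by []. lra.
  have up : 0 < u by rewrite lt0r upos.
  have := seg_bound cO Hf HL Op Ou up; rewrite ler_norml => /andP[_ B].
  have h1 := absmul_le (dotv (gradf p) (b - p)) uu.
  have h2 : `|L| * u ^+ 2 * dotv (b - p) (b - p) <= `|L| * dotv (b - p) (b - p).
    rewrite mulrAC -[X in _ <= X]mulr1; apply: ler_wpM2l => //.
    by rewrite expr_le1 // ltW.
  lra.
have [->|upos] := eqVneq u 0.
  rewrite scale0r addr0 gpE lee_fin; have : 0 <= `|fine (g b)| by []. 
  have := ler_norm (fine (g p)); lra.
have up : 0 < u by rewrite lt0r upos.
have -> : p + u *: (b - p) = u *: b + (1 - u) *: p.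
  by rewrite scalerBr scalerBl scale1r addrCA addrA.
apply: le_trans (cg b p u _) _; first by rewrite up u1.
rewrite gbE gpE -!EFinM -EFinD lee_fin.
have := absmul_le (fine (g b)) uu.
have : 0 <= 1 - u <= 1 by rewrite subr_ge0 ltW //= lerBlDr lerDl.
move/(absmul_le (fine (g p))); lra.
Qed.

Lemma dom_in (R : realType) n (Om : set 'cV[R]_n) (f : 'cV[R]_n -> R) gradf L g (p b : 'cV[R]_n) :
  open Om -> convex_on Om ->
  (forall y, Om y -> differentiable f y /\ forall w, 'd f y w = dotv (gradf y) w) ->
  (forall y z, Om y -> Om z -> enorm (gradf y - gradf z) <= L * enorm (y - z)) ->
  (forall y, g y != -oo%E) -> convex_efun g ->
  (forall a : R, closed [set y | (hobj Om f g y <= a%:E)%E]) ->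
  Om p -> g p = (fine (g p))%:E -> g b = (fine (g b))%:E -> Om b.
Proof.
move=> oO cO Hf HL gninf cg Hcl Op gpE gbE.
case: (pselect (Om b)) => // nOb; exfalso.
set d := b - p; set z := fun u : R => p + u *: d.
have z1 : z 1 = b by rewrite /z scale1r /d addrC subrK.
have z0 : z 0 = p by rewrite /z scale0r addr0.
have cz : continuous z.
  move=> u; apply: (@continuousD _ _ _ (fun=> p) (fun u : R => u *: d)); [exact: cst_continuous | exact: scalel_continuous].
set A := [set u : R | 0 <= u <= 1 /\ ~ Om (z u)].
have A1 : A 1 by split; [rewrite ler01 lexx | rewrite z1].
have A0 : A !=set0 by exists 1.
have lbA : lbound A 0 by move=> u [/andP[]].
have hlb : has_lbound A by exists 0.
set s := inf A.
have s0 : 0 <= s by apply: lb_le_inf.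
have s1 : s <= 1 by apply: ge_inf.
have below u : 0 <= u < s -> Om (z u).
  move=> /andP[u0 us]; case: (pselect (Om (z u))) => // nO; exfalso.
  have Au : A u by split => //; rewrite u0 (le_trans (ltW us) s1).
  by have := ge_inf hlb Au; rewrite leNgt us.
set B := f p + `|dotv (gradf p) d| + `|L| * dotv d d + (`|fine (g b)| + `|fine (g p)|).
have inS u : 0 <= u < s -> (hobj Om f g (z u) <= B%:E)%E.
  move=> us; have [u0 us'] := andP us.
  apply: (seg_h_bound cO Hf HL cg Op gpE gbE); last exact: below.
  by rewrite u0 (lt_le_trans us' s1).
have Oz : Om (z s).
  have [->|spos] := eqVneq s 0; first by rewrite z0.
  have sp : 0 < s by rewrite lt0r spos.
  have : (hobj Om f g (z s) <= B%:E)%E.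
    apply: (@closed_cvg _ _ (s^'-) _ z _ (Hcl B) _ (z s)).
      near=> u; apply: inS; apply/andP; split.
        by apply: ltW; near: u; exact: nbhs_left_gt.
      by near: u; exact: nbhs_left_lt.
    by apply: cvg_at_left_filter; exact: cz.
  case: (pselect (Om (z s))) => // nO.
  rewrite /hobj fext_out // addye //.
Unshelve. all: end_near.
have nz : nbhs (z s) Om by apply: open_nbhs_nbhs; split.
have := cz s _ nz => /= /nbhs_ballP [e e0 He].
have [a Aa ae] : exists2 a, A a & a < s + e.
  by apply: inf_lt => //; rewrite ltrDl.
have sa : s <= a by apply: ge_inf.
case: Aa => _; apply; apply: (He a).
rewrite /ball /= ler0_norm ?subr_le0 //; lra.
Qed.

Lemma qform_reg (R : realType) n (Hm : 'M[R]_n) (lam : R) (v : 'cV[R]_n) :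
  qform (Hm + lam%:M) v = qform Hm v + lam * dotv v v.
Proof. by rewrite /qform mulmxDl mul_scalar_mx dotvDr dotvZr. Qed.

Lemma qformZ (R : realType) n (Hm : 'M[R]_n) (c : R) (v : 'cV[R]_n) :
  qform Hm (c *: v) = c ^+ 2 * qform Hm v.
Proof. by rewrite /qform -scalemxAr dotvZl dotvZr mulrA expr2. Qed.

Lemma tr_ge0 (R : realType) n (Hm : 'M[R]_n) : (forall w, 0 <= qform Hm w) -> 0 <= \tr Hm.
Proof.
move=> Hq; rewrite /mxtrace; apply: sumr_ge0 => i _.
have := Hq (delta_mx i 0); congr (_ <= _).
rewrite /qform /dotv (bigD1 i) //= big1 ?addr0; last first.
  by move=> j ji; rewrite mxE (negbTE ji) mul0r.
rewrite !mxE eqxx mul1r (bigD1 i) //= big1 ?addr0; last first.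
  by move=> j ji; rewrite mxE (negbTE ji) andFb mulr0.
by rewrite mxE !eqxx mulr1.
Qed.

Lemma affine_mid (R : realType) n (f : 'cV[R]_n -> R) gradf (xs : nat -> 'cV[R]_n) i (a b : 'cV[R]_n) :
  affine_cut f gradf xs i (a + (1/2) *: (b - a)) =
  1/2 * affine_cut f gradf xs i a + 1/2 * affine_cut f gradf xs i b.
Proof.
rewrite /affine_cut.
have -> : a + (1/2) *: (b - a) - xs i = (a - xs i) + (1/2) *: ((b - xs i) - (a - xs i)).
  have -> : (b - xs i) - (a - xs i) = b - a by rewrite opprB addrA subrK.
  by rewrite addrAC.
rewrite !(dotvBr, dotvDr, dotvZr); lra.
Qed.

Lemma cm_ge_k (R : realType) n M (f : 'cV[R]_n -> R) gradf (xs : nat -> 'cV[R]_n) k y :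
  (0 < M)%N -> affine_cut f gradf xs k y <= cutmodel M f gradf xs k y.
Proof.
move=> M0; rewrite /cutmodel; apply: (big_rec (fun v => affine_cut f gradf xs k y <= v)) => //.
by move=> i v _ hv; rewrite le_max hv orbT.
Qed.

Lemma cm_le (R : realType) n M (f : 'cV[R]_n -> R) gradf (xs : nat -> 'cV[R]_n) k y c :
  (forall i, affine_cut f gradf xs i y <= c) -> cutmodel M f gradf xs k y <= c.
Proof.
move=> Hc; rewrite /cutmodel; apply: (big_ind (fun v => v <= c)) => //.
by move=> u w hu hw; rewrite ge_max hu hw.
Qed.

Lemma cm_mid (R : realType) n M (f : 'cV[R]_n -> R) gradf (xs : nat -> 'cV[R]_n) k (a b : 'cV[R]_n) :
  cutmodel M f gradf xs k (a + (1/2) *: (b - a)) <=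
  1/2 * cutmodel M f gradf xs k a + 1/2 * cutmodel M f gradf xs k b.
Proof.
rewrite /cutmodel; apply: (@big_ind3 R R R (fun u v w : R => u <= 1/2 * v + 1/2 * w)).
- by rewrite affine_mid.
- move=> x1 x2 x3 y1 y2 y3 h1 h2; rewrite ge_max; apply/andP; split.
    apply: (le_trans h1); apply: lerD; apply: ler_wpM2l => //; by rewrite le_max lexx.
  apply: (le_trans h2); apply: lerD; apply: ler_wpM2l => //; by rewrite le_max lexx orbT.
- by move=> i _; rewrite affine_mid.
Qed.

Lemma vnorm_le (R : realType) n (w : 'cV[R]_n) : `|w| <= enorm w.
Proof.
have -> : `|w| = mx_norm w by [].
rewrite mx_normrE; apply: (big_ind (fun v => v <= enorm w)); first exact: enorm_ge0.
  by move=> a b ha hb; rewrite ge_max ha hb.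
move=> [i j] _ /=; rewrite (ord1 j) /enorm -sqrtr_sqr ler_sqrt ?dotv_ge0 //.
rewrite /dotv (bigD1 i) //= -expr2 lerDl; apply: sumr_ge0 => k _; by rewrite -expr2 sqr_ge0.
Qed.

Lemma closed_sub (R : realType) n (Om : set 'cV[R]_n) f g :
  (forall a : R, compact [set y | (hobj Om f g y <= a%:E)%E]) ->
  forall a : R, closed [set y | (hobj Om f g y <= a%:E)%E].
Proof. by move=> Hc a; apply: compact_closed; [exact: norm_hausdorff | exact: Hc]. Qed.

Lemma comb_eq (R : realType) n (p b : 'cV[R]_n) (u : R) :
  p + u *: (b - p) = u *: b + (1 - u) *: p.
Proof. by rewrite scalerBr scalerBl scale1r addrCA addrA. Qed.
Theorem mainTheorem2 (R : realType) (n : nat)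
  (Om : set 'cV[R]_n) (f : 'cV[R]_n -> R) (gradf : 'cV[R]_n -> 'cV[R]_n) (L : R)
  (g : 'cV[R]_n -> \bar R)
  (M : nat) (alpha beta tau_min mu_min mu_max gdec ginc mu0 C : R)
  (H : nat -> 'M[R]_n) (x xh : nat -> 'cV[R]_n) (mu t : nat -> R) :
  (* Omega open and convex *)
  open Om -> convex_on Om ->
  (* f convex and differentiable on Omega with gradient gradf, L-Lipschitz *)
  convex_fun_on Om f ->
  (forall y, Om y -> differentiable f y /\ forall w, 'd f y w = dotv (gradf y) w) ->
  (forall y z, Om y -> Om z -> enorm (gradf y - gradf z) <= L * enorm (y - z)) ->
  (* g : R^n -> R u {+oo} convex with closed sublevel sets *)
  (forall y, g y != -oo%E) -> convex_efun g ->
  (forall a : R, closed [set y | (g y <= a%:E)%E]) ->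
  (* h = f + g has compact sublevel sets and finite infimum *)
  (forall a : R, compact [set y | (hobj Om f g y <= a%:E)%E]) ->
  (ereal_inf (range (hobj Om f g)) < +oo)%E ->
  (* parameters *)
  (0 < M)%N -> 0 < alpha < 1 -> 0 < beta < 1 -> 0 < tau_min ->
  0 < mu_min -> mu_min <= mu_max -> 0 < gdec < 1 -> 1 < ginc ->
  mu_min <= mu0 <= mu_max ->
  (* curvature matrices: symmetric PSD with spectral norm <= C *)
  (forall k, (H k)^T = H k) ->
  (forall k w, 0 <= qform (H k) w) ->
  (forall k w, enorm (H k *m w) <= C * enorm w) ->
  (* the OSMM run started at x^0 in Omega *)
  Om (x 0%N) -> mu 0%N = mu0 ->
  osmm_run Om f gradf g M alpha beta tau_min mu_min mu_max gdec ginc H x xh mu t ->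
  (forall k, (hobj Om f g (x k.+1) <= hobj Om f g (x k))%E) /\
  (fun k => xh k - x k) @ \oo --> (0 : 'cV[R]_n).
Proof.
move=> oO cO cf Hf HL gninf cg _ Hcomp Hinf M0 /andP[a0 a1] /andP[b0 b1] tm0 mm0 mmle
  _ gi1 /andP[m0l _] _ Hpsd _ Ox0 mu0E Hrun.
have Hcl := closed_sub Hcomp.
have [_ [y0 _ <-] hy0] := ereal_inf_lt Hinf.
have Oy0 : Om y0.
  case: (pselect (Om y0)) => // nO; move: hy0; by rewrite /hobj fext_out // addye.
have gy0E : g y0 = (fine (g y0))%:E.
  apply: fin_of => //; apply/negP => /eqP gE; move: hy0.
  by rewrite /hobj fext_in // gE addey.
have mub : forall k, mu_min <= mu k.
  elim => [|k IH]; first by rewrite mu0E.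
  have [_ _ _ ->] := Hrun k; case: ifP => _; first by rewrite le_max lexx orbT.
  rewrite le_min mmle andbT; nra.
set lam := fun k => lambdak tau_min (mu k) (H k).
set lmin := mu_min * tau_min.
have lmin0 : 0 < lmin by rewrite mulr_gt0.
have lamb : forall k, lmin <= lam k.
  move=> k; rewrite /lam /lambdak.
  have : 0 <= tauk (H k) by rewrite /tauk divr_ge0 // tr_ge0.
  have := mub k; rewrite /lmin; nra.
have qAge : forall k w, lam k * dotv w w <= qform (regmx tau_min (mu k) (H k)) w.
  by move=> k w; rewrite /regmx qform_reg lerDr.
have tk : forall k, 0 < t k <= 1.
  move=> k; have [_ [j [-> _]] _ _] := Hrun k.
  by rewrite exprn_gt0 //= exprn_ile1 // ltW.
have gxh : forall k, g (xh k) = (fine (g (xh k)))%:E.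
  move=> k; apply: fin_of => //; apply/negP => /eqP gE.
  have [Hmin _ _ _] := Hrun k; have := Hmin y0.
  by rewrite gE gy0E addey // -EFinD leye_eq.
have Oxh : forall k, Om (xh k).
  by move=> k; apply: (dom_in oO cO Hf HL gninf cg Hcl Oy0 gy0E (gxh k)).
have Ox : forall k, Om (x k).
  elim => [|k IH] //; have [_ _ -> _] := Hrun k.
  apply: (seg_in (s := 1)) => //; last by have /andP[t0 t1] := tk k; rewrite ltW.
  by rewrite scale1r addrC subrK.
set tmin := Num.min 1 (beta * lmin / (4 * (`|L| + 1))).
have step : forall k, g (x k) = (fine (g (x k)))%:E ->
   [/\ (hobj Om f g (x k.+1) <= ((f (x k) + fine (g (x k))) - alpha * t k / 2 * qform (regmx tau_min (mu k) (H k)) (xh k - x k))%:E)%E,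
       tmin <= t k & g (x k.+1) = (fine (g (x k.+1)))%:E].
  move=> k gxE.
  have [Hmin [j [tE [arm notarm]]] xE _] := Hrun k.
  set xk := x k in Hmin arm notarm xE gxE *.
  set v := xh k - xk in Hmin arm notarm xE *.
  set A := regmx tau_min (mu k) (H k) in Hmin arm notarm qAge *.
  set q := qform A v in arm notarm *.
  set Gx := fine (g xk) in gxE *; set Gh := fine (g (xh k)).
  have Gh0 : g (xh k) = Gh%:E by exact: gxh.
  have Oxk : Om xk := Ox k.
  have Oxhk : Om (xh k) := Oxh k.
  have q0 : lam k * dotv v v <= q by exact: qAge.
  have dd0 : 0 <= dotv v v := dotv_ge0 v.
  (* key inequality from optimality *)
  have key : dotv (gradf xk) v + Gh - Gx <= - (3 / 4) * q.
    set y := xk + (1/2) *: v.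
    have half : 0 < (1/2 : R) < 1 by apply/andP; split; lra.
    have gy : (g y <= (1/2 * Gh + (1 - 1/2) * Gx)%:E)%E.
      rewrite /y /v comb_eq; apply: le_trans (cg _ _ (1/2) half) _.
      by rewrite Gh0 gxE -!EFinM -EFinD.
    have gyE : g y = (fine (g y))%:E.
      apply: fin_of => //; apply/negP => /eqP gE; move: gy; by rewrite gE leye_eq.
    have Hy := Hmin y.
    rewrite Gh0 gyE -!EFinD lee_fin in Hy.
    move: Hy; rewrite -/v -/q; have -> : y - xk = (1/2) *: v by rewrite /y addrAC subrr add0r.
    rewrite qformZ -/q => Hy.
    have cmid := @cm_mid R n M f gradf x k xk (xh k); rewrite -/v -/y in cmid.
    have clx : cutmodel M f gradf x k xk <= f xk.
      apply: cm_le => i; rewrite /affine_cut.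
      exact: (grad_ineq cO cf Hf HL (Ox i) Oxk).
    have clh := @cm_ge_k R n M f gradf x k (xh k) M0.
    rewrite /affine_cut -/xk -/v in clh.
    move: gy; rewrite gyE lee_fin => gy.
    have e4 : (1/2 : R) ^+ 2 * q / 2 = q / 8 by rewrite expr2; field.
    move: Hy; rewrite e4 => Hy.
    lra.
  have lam0 : 0 <= lam k by apply: le_trans (ltW lmin0) (lamb k).
  have qpos : 0 <= q by apply: le_trans q0; rewrite mulr_ge0.
  have arm_s : forall s, 0 < s <= 1 -> s * (4 * (`|L| + 1)) <= lam k ->
    (fext Om f (xk + s *: v) + s%:E * g (xh k) + (1 - s)%:E * g xk <=
     hobj Om f g xk - (alpha * s / 2 * q)%:E)%E.
    move=> s /andP[s0 s1] hs.
    have Os : Om (xk + s *: v).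
      apply: (seg_in (s:=1)) => //; first by rewrite scale1r /v addrC subrK.
      by rewrite ltW.
    rewrite fext_in // Gh0 gxE /hobj fext_in // gxE -!EFinM -!EFinD lee_fin.
    have B := seg_bound cO Hf HL Oxk Os s0; move: B; rewrite ler_norml => /andP[_ B].
    have h1 : `|L| * s <= lam k / 4.
      have : s * (4 * (`|L| + 1)) = 4 * (`|L| * s) + 4 * s by ring.
      move: hs; lra.
    have h2 : `|L| * s ^+ 2 * dotv v v <= s * (lam k * dotv v v) / 4.
      have -> : `|L| * s ^+ 2 * dotv v v = s * ((`|L| * s) * dotv v v) by ring.
      have -> : s * (lam k * dotv v v) / 4 = s * ((lam k / 4) * dotv v v) by ring.
      by apply: ler_wpM2l; [exact: ltW | apply: ler_wpM2r].
    have h3 : s * (lam k * dotv v v) <= s * q by apply: ler_wpM2l => //; exact: ltW.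
    have h4 : 0 <= s * q by rewrite mulr_ge0 // ltW.
    have h5 : alpha * (s * q) <= s * q.
      by rewrite -[X in _ <= X]mul1r; apply: ler_wpM2r => //; exact: ltW.
    have k2 : s * (dotv (gradf xk) v + Gh - Gx) <= s * (- (3 / 4) * q).
      by apply: ler_wpM2l => //; exact: ltW.
    have -> : alpha * s / 2 * q = alpha * (s * q) / 2 by ring.
    have E1 : s * (dotv (gradf xk) v + Gh - Gx) = s * dotv (gradf xk) v + s * Gh - s * Gx by ring.
    have E2 : s * (- (3 / 4) * q) = - (3/4) * (s * q) by ring.
    have E3 : (1 - s) * Gx = Gx - s * Gx by ring.
    rewrite E3; move: k2; rewrite E1 E2 => k2.
    lra.
  have L1 : 0 < 4 * (`|L| + 1) by rewrite mulr_gt0 // ltr_pwDr.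
  have tb : tmin <= t k.
    rewrite tE; case: j tE arm notarm => [|j'] tE arm notarm.
      by rewrite expr0 ge_min lexx.
    have nA := notarm j' (ltnSn j').
    have hlt : lam k < beta ^+ j' * (4 * (`|L| + 1)).
      rewrite ltNge; apply/negP => hh; apply: nA; apply: arm_s => //.
      by rewrite exprn_gt0 //= exprn_ile1 // ltW.
    rewrite exprS ge_min; apply/orP; right.
    rewrite -mulrA ler_wpM2l ?(ltW b0) // ler_pdivrMr //.
    by apply: le_trans (lamb k) (ltW hlt).
  have [t0 t1] := andP (tk k).
  have gcomb : (g (x k.+1) <= (t k * Gh + (1 - t k) * Gx)%:E)%E.
    rewrite xE /v comb_eq; have [t1E|tn1] := eqVneq (t k) 1.
      by rewrite t1E subrr scale0r addr0 scale1r Gh0 mul1r mul0r addr0.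
    have tt : 0 < t k < 1 by rewrite t0 lt_neqAle tn1 t1.
    apply: le_trans (cg _ _ _ tt) _.
    by rewrite Gh0 gxE -!EFinM -EFinD.
  have gnext : g (x k.+1) = (fine (g (x k.+1)))%:E.
    apply: fin_of => //; apply/negP => /eqP gE; move: gcomb; by rewrite gE leye_eq.
  split => //.
  have Oxk1 : Om (x k.+1) := Ox k.+1.
  move: arm; rewrite -tE -xE /hobj !fext_in // Gh0 gxE -!EFinM -!EFinD lee_fin => arm.
  rewrite gnext -EFinD lee_fin.
  move: gcomb; rewrite gnext lee_fin => gcomb.
  lra.
have qnn : forall k w, 0 <= qform (regmx tau_min (mu k) (H k)) w.
  move=> k w; apply: le_trans (qAge k w); rewrite mulr_ge0 ?dotv_ge0 //.
  exact: le_trans (ltW lmin0) (lamb k).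
have hinf : forall k, g (x k) = +oo%E -> hobj Om f g (x k) = +oo%E.
  by move=> k gE; rewrite /hobj fext_in // gE addey.
have gfin : forall k, g (x k.+1) = (fine (g (x k.+1)))%:E.
  move=> k; case: (pselect (g (x k) = +oo%E)) => gk; last first.
    by have [] := step k (fin_of (gninf _) (introN eqP gk)).
  have [_ [j [tE [_ notarm]]] xE _] := Hrun k.
  have j0 : j = 0%N.
    case: j tE notarm => // j' _ notarm; exfalso; apply: (notarm 0%N) => //.
    by rewrite hinf // addye ?leey.
  move: xE; rewrite tE j0 expr0 scale1r addrC subrK => ->; exact: gxh.
have mono : forall k, (hobj Om f g (x k.+1) <= hobj Om f g (x k))%E.
  move=> k; case: (pselect (g (x k) = +oo%E)) => gk; first by rewrite (hinf k gk) leey.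
  have gxE := fin_of (gninf _) (introN eqP gk).
  have [hs _ _] := step k gxE; apply: le_trans hs _.
  rewrite /hobj fext_in // gxE -EFinD lee_fin lerBlDr lerDl.
  have [t0 _] := andP (tk k).
  by rewrite mulr_ge0 ?qnn // mulr_ge0 // mulr_ge0 // ltW.
split => //.
set a := fun k => f (x k.+1) + fine (g (x k.+1)).
have haE : forall k, hobj Om f g (x k.+1) = (a k)%:E.
  by move=> k; rewrite /hobj fext_in // gfin -EFinD.
have tmin0 : 0 < tmin.
  have L1 : 0 < 4 * (`|L| + 1) by have : 0 <= `|L| by []; lra.
  by rewrite lt_min ltr01 /= divr_gt0 ?mulr_gt0.
set c := alpha * tmin * lmin / 2.
have c0 : 0 < c by rewrite /c divr_gt0 // !mulr_gt0.
have ha : forall k, a k.+1 <= a k - c * dotv (xh k.+1 - x k.+1) (xh k.+1 - x k.+1).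
  move=> k; have [hs tb _] := step k.+1 (gfin k).
  rewrite haE lee_fin in hs.
  have E : f (x k.+1) + fine (g (x k.+1)) = a k by [].
  rewrite E in hs.
  set w := xh k.+1 - x k.+1 in hs *.
  set q := qform (regmx tau_min (mu k.+1) (H k.+1)) w in hs *.
  have dd0 := dotv_ge0 w.
  have lq : lmin * dotv w w <= q.
    apply: le_trans (qAge _ _); exact: ler_wpM2r (lamb _).
  have tq : tmin * (lmin * dotv w w) <= t k.+1 * q.
    by apply: ler_pM => //; [exact: ltW | rewrite mulr_ge0 // ltW].
  have E1 : c * dotv w w = alpha / 2 * (tmin * (lmin * dotv w w)) by rewrite /c; ring.
  have E2 : alpha * t k.+1 / 2 * q = alpha / 2 * (t k.+1 * q) by ring.
  have : alpha / 2 * (tmin * (lmin * dotv w w)) <= alpha / 2 * (t k.+1 * q).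
    by apply: ler_wpM2l => //; rewrite divr_ge0 // ltW.
  move: hs; rewrite E1 E2; lra.
have anoninc : forall k, a k.+1 <= a k.
  move=> k; apply: le_trans (ha k) _; rewrite lerBlDr lerDl.
  by apply: mulr_ge0; [exact: ltW | exact: dotv_ge0].
have amono : forall k i, a (i + k)%N <= a k.
  move=> k; elim => [|i IH] //; rewrite addSn; exact: le_trans (anoninc _) IH.
have [m hm] : exists m, forall k, m <= a k.
  pose F := (fun k => x k.+1) @ \oo.
  have FS : F [set y | (hobj Om f g y <= (a 0%N)%:E)%E].
    apply: filterS (nbhs_infty_ge 0%N) => k _ /=; rewrite haE lee_fin.
    by have := amono 0%N k; rewrite addn0.
  have [p [Sp clp]] := Hcomp (a 0%N) F _ FS.
  have Op : Om p.
    case: (pselect (Om p)) => // nO; move: Sp; by rewrite /= /hobj fext_out // addye.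
  have gpE : g p = (fine (g p))%:E.
    apply: fin_of => //; apply/negP => /eqP gE; move: Sp.
    by rewrite /= /hobj fext_in // gE addey.
  set hp := f p + fine (g p).
  exists (hp - 1) => k; rewrite leNgt; apply/negP => hk.
  have FS' : F [set y | (hobj Om f g y <= (hp - 1)%:E)%E].
    apply: filterS (nbhs_infty_ge k) => j kj /=; rewrite haE lee_fin.
    have := amono k (j - k)%N; rewrite subnK //; move: hk; lra.
  have cl : closure [set y | (hobj Om f g y <= (hp - 1)%:E)%E] p.
    by move=> B nB; exact: clp _ _ FS' nB.
  have := Hcl (hp - 1) p cl; rewrite /= /hobj fext_in // gpE -EFinD lee_fin -/hp.
  lra.
have hlb : has_lbound (range a) by exists m => _ [k _ <-]; exact: hm.
have al := nonincreasing_cvgn (proj1 (nonincreasing_seqP a) anoninc) hlb.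
set l := inf _ in al.
have al1 : (fun k => a k.+1) @ \oo --> l by rewrite cvg_shiftS.
have d0 : (fun k => a k - a k.+1) @ \oo --> 0.
  by have := cvgB al al1; rewrite subrr; apply; exact: filter_class.
have ddc : (fun k => dotv (xh k.+1 - x k.+1) (xh k.+1 - x k.+1)) @ \oo --> 0.
  apply/(cvgrPdist_lt (K:=R)) => e e0.
  have Hc := (@cvgrPdist_lt R _ _ _ _ _ _).1 d0 (c * e) (mulr_gt0 c0 e0).
  apply: filterS (Hc _) => k /=; rewrite !sub0r !normrN => hk.
  have h1 := ha k; have dd0 := dotv_ge0 (xh k.+1 - x k.+1).
  rewrite ger0_norm //.
  have : a k - a k.+1 < c * e by apply: le_lt_trans (ler_norm _) hk.
  move=> h2; have : c * dotv (xh k.+1 - x k.+1) (xh k.+1 - x k.+1) < c * e by lra.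
  by rewrite ltr_pM2l.
rewrite -cvg_shiftS.
apply/(cvgrPdist_lt (K:=R)) => e e0.
have Hc := (@cvgrPdist_lt R _ _ _ _ _ _).1 ddc (e ^+ 2) (exprn_gt0 2 e0).
apply: filterS (Hc _) => k /=; rewrite !sub0r !normrN => hk.
apply: le_lt_trans (vnorm_le _) _.
rewrite /enorm -(ger0_norm (ltW e0)) -sqrtr_sqr ltr_sqrt ?exprn_gt0 ?normr_gt0 ?gt_eqF //.
exact: le_lt_trans (ler_norm _) hk.
Qed.
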